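(* Let $\Gamma=(V,E)$ be a directed graph (finite or infinite) in which every vertex has outdegree at most $M<\infty$ and at least one outgoing edge, and let $q>1$. Then there exists a unique vector $\overline{t}=(t_v)_{v\in V}\in[1,M^{1/(q-1)}]^V$ such that $$t_v^q = \sum_{w:\ vw\in E} t_w\qquad\text{for all } v\in V.$$
   Context: $vw\in E$ denotes a directed edge from $v$ to $w$. *)

(* Defs.v *)
From Stdlib Require Import Reals List.
Open Scope R_scope.

Definition out_list {V : Type} (E : V -> V -> Prop) (v : V) (l : list V) : Prop :=
  NoDup l /\ forall w, In w l <-> E v w.

Definition sumL {V : Type} (t : V -> R) (l : list V) : R :=
  fold_right Rplus 0 (map t l).

(* Main.v *)
Require Import Defs.
From Stdlib Require Import Reals List Permutation Lra.
From Stdlib Require Import ClassicalEpsilon Classical FunctionalExtensionality.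
Open Scope R_scope.

Lemma rp_lt a b p : 0 < a -> 0 < p -> a < b -> Rpower a p < Rpower b p.
Proof.
  intros Ha Hp Hab. unfold Rpower. apply exp_increasing.
  apply Rmult_lt_compat_l; [lra|]. apply ln_increasing; lra.
Qed.

Lemma rp_le a b p : 0 < a -> 0 < p -> a <= b -> Rpower a p <= Rpower b p.
Proof.
  intros Ha Hp Hab. destruct (Rle_lt_or_eq_dec _ _ Hab) as [H|H].
  - left; apply rp_lt; auto.
  - subst; lra.
Qed.

Lemma rp_le_inv a b p : 0 < a -> 0 < b -> 0 < p -> Rpower a p <= Rpower b p -> a <= b.
Proof.
  intros Ha Hb Hp H. destruct (Rle_or_lt a b) as [|Hl]; auto.
  pose proof (rp_lt b a p Hb Hp Hl). lra.
Qed.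

Lemma rp_one p : Rpower 1 p = 1.
Proof. unfold Rpower. rewrite ln_1, Rmult_0_r. apply exp_0. Qed.

Lemma rp_pos a p : 0 < Rpower a p.
Proof. unfold Rpower. apply exp_pos. Qed.

Lemma rp_inv a p : 0 < a -> 0 < p -> Rpower (Rpower a (1/p)) p = a.
Proof.
  intros Ha Hp. rewrite Rpower_mult.
  replace (1/p*p) with 1 by (field; lra). apply Rpower_1; auto.
Qed.

Lemma sumL_le {V} (f g : V -> R) l :
  (forall w, In w l -> f w <= g w) -> sumL f l <= sumL g l.
Proof.
  induction l as [|a l IH]; simpl; intros H; unfold sumL; simpl; [lra|].
  apply Rplus_le_compat; [apply H; auto|]. apply IH; auto.
Qed.

Lemma sumL_scal {V} (f : V -> R) c l :
  sumL (fun w => c * f w) l = c * sumL f l.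
Proof.
  induction l as [|a l IH]; unfold sumL in *; simpl; [ring|]. rewrite IH; ring.
Qed.

Lemma sumL_perm {V} (f : V -> R) l l' : Permutation l l' -> sumL f l = sumL f l'.
Proof.
  induction 1; unfold sumL in *; simpl; try lra.
Qed.

Lemma sumL_ge1 {V} (f : V -> R) l : l <> nil -> (forall w, 1 <= f w) -> 1 <= sumL f l.
Proof.
  destruct l as [|a l]; [congruence|]. intros _ H.
  unfold sumL; simpl. fold (sumL f l).
  assert (0 <= sumL f l).
  { clear a. induction l; unfold sumL in *; simpl; [lra|]. specialize (H a); lra. }
  specialize (H a); lra.
Qed.

Lemma sumL_leK {V} (f : V -> R) K l : (forall w, f w <= K) -> sumL f l <= INR (length l) * K.
Proof.
  intros H. induction l; unfold sumL in *; [simpl; lra|].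
  change (length (a::l)) with (S (length l)). rewrite S_INR. simpl. specialize (H a). lra.
Qed.

Theorem lemma2p1 (V : Type) (E : V -> V -> Prop) (M q : R)
  (hdeg : forall v : V, exists l : list V,
      out_list E v l /\ INR (length l) <= M /\ l <> nil)
  (hq : 1 < q) :
  exists! t : V -> R,
    (forall v, 1 <= t v <= Rpower M (1 / (q - 1))) /\
    (forall v l, out_list E v l -> Rpower (t v) q = sumL t l).
Proof.
  pose (L := fun v => proj1_sig (constructive_indefinite_description _ (hdeg v))).
  assert (HL : forall v, out_list E v (L v) /\ INR (length (L v)) <= M /\ L v <> nil).
  { intro v. unfold L. destruct (constructive_indefinite_description _ (hdeg v)); auto. }
  assert (Hperm : forall (f : V -> R) v l, out_list E v l -> sumL f l = sumL f (L v)).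
  { intros f v l [Hn Hi]. destruct (HL v) as [[Hn' Hi'] _]. apply sumL_perm.
    apply NoDup_Permutation; auto. intro x. rewrite Hi, Hi'. tauto. }
  set (K := Rpower M (1 / (q - 1))).
  destruct (classic (inhabited V)) as [[v0]|Hne].
  2:{ exists (fun _ => K). split; [split; intros v; exfalso; apply Hne; constructor; exact v|].
      intros t' _. apply functional_extensionality. intro v; exfalso; apply Hne; constructor; exact v. }
  assert (HM : 1 <= M).
  { destruct (HL v0) as [_ [H1 H2]]. destruct (L v0); [congruence|].
    change (length (v::l)) with (S (length l)) in H1. rewrite S_INR in H1. pose proof (pos_INR (length l)). lra. }
  assert (HK : 1 <= K).
  { rewrite <- (rp_one (1/(q-1))). apply rp_le; try lra. apply Rdiv_lt_0_compat; lra. }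
  assert (HKq : Rpower K q = M * K).
  { replace q with ((q-1)+1) at 1 by ring. rewrite Rpower_plus, Rpower_1 by lra.
    unfold K at 1. rewrite Rpower_mult. replace (1/(q-1)*(q-1)) with 1 by (field; lra).
    rewrite Rpower_1 by lra. reflexivity. }
  assert (Hq0 : 0 < q) by lra.
  assert (Hq1 : 0 < 1/q) by (apply Rdiv_lt_0_compat; lra).
  pose (Sx := fun (x : V -> R) => (forall v, 1 <= x v <= K) /\ (forall v, Rpower (x v) q <= sumL x (L v))).
  assert (Hone : Sx (fun _ => 1)).
  { split; [intros; lra|]. intro v. rewrite rp_one. apply sumL_ge1; [apply HL|intros; lra]. }
  assert (Hlub : forall v, {m | is_lub (fun r => exists x, Sx x /\ x v = r) m}).
  { intro v. apply completeness.
    - exists K. intros r [x [[Hx _] <-]]. apply Hx.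
    - exists 1, (fun _ => 1). split; auto. }
  pose (t := fun v => proj1_sig (Hlub v)).
  assert (Ht : forall v, is_lub (fun r => exists x, Sx x /\ x v = r) (t v)).
  { intro v. unfold t. destruct (Hlub v); auto. }
  assert (Hxt : forall x v, Sx x -> x v <= t v).
  { intros x v Hx. apply (proj1 (Ht v)). exists x; auto. }
  assert (Htb : forall v, 1 <= t v <= K).
  { intro v. split.
    - apply (Hxt (fun _ => 1)); auto.
    - apply (proj2 (Ht v)). intros r [x [[Hx _] <-]]. apply Hx. }
  assert (Hle : forall v, Rpower (t v) q <= sumL t (L v)).
  { intro v. assert (Hs : 1 <= sumL t (L v)) by (apply sumL_ge1; [apply HL|intro; apply Htb]).
    rewrite <- (rp_inv (sumL t (L v)) q) by lra. apply rp_le; [pose proof (Htb v); lra|lra|].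
    apply (proj2 (Ht v)). intros r [x [Hx <-]].
    apply (rp_le_inv _ _ q); [pose proof (proj1 Hx v); lra|apply rp_pos|lra|].
    rewrite rp_inv by lra. eapply Rle_trans; [apply (proj2 Hx)|].
    apply sumL_le. intros; apply Hxt; auto. }
  pose (y := fun v => Rpower (sumL t (L v)) (1/q)).
  assert (Hs : forall v, 1 <= sumL t (L v)) by (intro v; apply sumL_ge1; [apply HL|intro; apply Htb]).
  assert (Hty : forall v, t v <= y v).
  { intro v. apply (rp_le_inv _ _ q); [pose proof (Htb v); lra|apply rp_pos|lra|].
    unfold y. rewrite rp_inv by (specialize (Hs v); lra). apply Hle. }
  assert (Hy : Sx y).
  { split.
    - intro v. split; [pose proof (Hty v); pose proof (Htb v); lra|].
      apply (rp_le_inv _ _ q); [apply rp_pos|lra|lra|].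
      unfold y. rewrite rp_inv by (specialize (Hs v); lra). rewrite HKq.
      eapply Rle_trans; [apply (sumL_leK _ K); intro; apply Htb|].
      apply Rmult_le_compat_r; [lra|apply HL].
    - intro v. unfold y at 1. rewrite rp_inv by (specialize (Hs v); lra).
      apply sumL_le. intros; apply Hty. }
  assert (Hfix : forall v l, out_list E v l -> Rpower (t v) q = sumL t l).
  { intros v l Hol. rewrite (Hperm _ _ _ Hol). apply Rle_antisym; [apply Hle|].
    rewrite <- (rp_inv (sumL t (L v)) q) by (specialize (Hs v); lra).
    apply rp_le; [apply rp_pos|lra|]. apply (Hxt y v Hy). }
  exists t. split; [split; auto|].
  intros s [Hsb Hsf].
  assert (Hcmp : forall a b : V -> R, (forall v, 1 <= a v <= K) -> (forall v, 1 <= b v <= K) ->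
     (forall v, Rpower (a v) q = sumL a (L v)) -> (forall v, Rpower (b v) q = sumL b (L v)) ->
     forall v, a v <= b v).
  { intros a b Ha Hb Hfa Hfb.
    assert (Hc : {c | is_lub (fun r => exists v, a v / b v = r) c}).
    { apply completeness.
      - exists K. intros r [v <-]. specialize (Ha v); specialize (Hb v).
        apply Rmult_le_reg_r with (b v); [lra|]. unfold Rdiv.
        rewrite Rmult_assoc, Rinv_l, Rmult_1_r by lra. nra.
      - exists (a v0 / b v0), v0; auto. }
    destruct Hc as [c [Hc1 Hc2]].
    assert (Hrat : forall v, a v / b v <= c) by (intro v; apply Hc1; exists v; auto).
    assert (Hcp : 0 < c).
    { eapply Rlt_le_trans; [|apply (Hrat v0)]. specialize (Ha v0); specialize (Hb v0).
      apply Rdiv_lt_0_compat; lra. }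
    set (d := Rpower c (1/q)).
    assert (Hd : forall v, a v <= d * b v).
    { intro v. specialize (Ha v) as Ha'. specialize (Hb v) as Hb'.
      apply (rp_le_inv _ _ q); [lra|apply Rmult_lt_0_compat; [apply rp_pos|lra]|lra|].
      rewrite <- Rpower_mult_distr by (try apply rp_pos; lra). unfold d. rewrite rp_inv by lra.
      rewrite Hfa, Hfb, <- sumL_scal. apply sumL_le. intros w _.
      specialize (Hrat w). specialize (Hb w).
      apply Rmult_le_reg_r with (/ b w); [apply Rinv_0_lt_compat; lra|].
      rewrite Rmult_assoc, Rinv_r, Rmult_1_r by lra. exact Hrat. }
    assert (Hcd : c <= d).
    { apply Hc2. intros r [v <-]. specialize (Hd v). specialize (Hb v).
      apply Rmult_le_reg_r with (b v); [lra|]. unfold Rdiv.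
      rewrite Rmult_assoc, Rinv_l, Rmult_1_r by lra. exact Hd. }
    assert (Hd1 : d <= 1).
    { destruct (Rle_or_lt d 1) as [|Hgt]; auto. exfalso.
      pose proof (Rpower_lt d 1 q Hgt hq). rewrite Rpower_1 in H by lra.
      assert (Rpower d q = c) by (unfold d; apply rp_inv; lra). lra. }
    intro v. specialize (Hd v). specialize (Hb v).
    assert (0 < d) by apply rp_pos. nra. }
  assert (Hsf' : forall v, Rpower (s v) q = sumL s (L v)) by (intro v; apply Hsf, HL).
  assert (Htf' : forall v, Rpower (t v) q = sumL t (L v)) by (intro v; apply Hfix, HL).
  apply functional_extensionality. intro v. apply Rle_antisym; apply Hcmp; auto.
Qed.
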